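(* Let $L\subseteq Q$ be a dense extension of Lie algebras with $Z(Q)=0$, and suppose that $A(Q)$ is right ideally absorbed into $A_0$. Then $Q$ is an algebra of quotients of $L$.
   Context: Lie algebras over a commutative unital ring $\Phi$. $\mathrm{ad}_x(y)=[x,y]$; $A(Q)$ is the associative subalgebra of $\mathrm{End}_\Phi(Q)$ generated by all $\mathrm{ad}_x$, $x\in Q$; $M(Q)$ is generated by the identity and all $\mathrm{ad}_x$. $A_0=\{\mu\in A(Q):\mu(L)\subseteq L\}$. $Z(Q)=\{a\in Q:[a,Q]=0\}$. An extension $L\subseteq Q$ is dense if the only $\mu\in M(Q)$ with $\mu(L)=0$ is $\mu=0$. For associative algebras $A\subseteq S$, $S$ is right ideally absorbed into $A$ if for every nonzero $q\in S$ there is a two-sided ideal $I$ of $A$ with $\mathrm{l.ann}_A(I)=\{a\in A:aI=0\}=0$ and $0\ne qI\subseteq A$. $Q$ is an algebra of quotients of $L$ if for every nonzero $q\in Q$ there is an ideal $J$ of $L$ with $\mathrm{Ann}_L(J)=\{a\in L:[a,J]=0\}=0$ and $0\ne[J,q]\subseteq L$. *)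

(* Defs.v *)
From HB Require Import structures.
From mathcomp Require Import all_boot all_algebra.
Set Implicit Arguments. Unset Strict Implicit. Unset Printing Implicit Defensive.
Import GRing.Theory.
Local Open Scope ring_scope.

Section LieDefs.
Variables (Phi : comPzRingType) (Q : lmodType Phi) (br : Q -> Q -> Q).

Definition lie_bracket : Prop :=
  [/\ forall (a : Phi) (x y z : Q), br (a *: x + y) z = a *: br x z + br y z,
      forall (a : Phi) (x y z : Q), br x (a *: y + z) = a *: br x y + br x z,
      forall x : Q, br x x = 0 &
      forall x y z : Q, br x (br y z) + br y (br z x) + br z (br x y) = 0].

Definition lie_subalgebra (L : Q -> Prop) : Prop :=
  [/\ L 0,
      forall (a : Phi) x y, L x -> L y -> L (a *: x + y) &
      forall x y, L x -> L y -> L (br x y)].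

Definition ad (x : Q) : Q -> Q := fun y => br x y.

Inductive inA : (Q -> Q) -> Prop :=
  | inA_ad x : inA (ad x)
  | inA_add f g : inA f -> inA g -> inA (fun v => f v + g v)
  | inA_comp f g : inA f -> inA g -> inA (fun v => f (g v))
  | inA_scale (c : Phi) f : inA f -> inA (fun v => c *: f v).

(* M(Q): the subalgebra generated by the identity and the ad_x,
   i.e. Phi*id + A(Q) *)
Definition inM (mu : Q -> Q) : Prop :=
  exists (c : Phi) (f : Q -> Q), inA f /\ mu = (fun v => c *: v + f v).

Definition inA0 (L : Q -> Prop) (mu : Q -> Q) : Prop :=
  inA mu /\ forall x, L x -> L (mu x).

Definition center_zero : Prop :=
  forall a : Q, (forall y, br a y = 0) -> a = 0.

Definition dense_ext (L : Q -> Prop) : Prop :=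
  forall mu, inM mu -> (forall x, L x -> mu x = 0) -> mu = (fun _ => 0).

Definition alg_ideal (A I : (Q -> Q) -> Prop) : Prop :=
  [/\ forall f, I f -> A f,
      I (fun _ => 0),
      forall f g, I f -> I g -> I (fun v => f v + g v),
      forall (c : Phi) f, I f -> I (fun v => c *: f v) &
      forall a f, A a -> I f -> I (fun v => a (f v)) /\ I (fun v => f (a v))].

Definition right_ideally_absorbed (S A : (Q -> Q) -> Prop) : Prop :=
  forall q, S q -> q <> (fun _ => 0) ->
  exists I, [/\ alg_ideal A I,
     (forall a, A a -> (forall i, I i -> (fun v => a (i v)) = (fun _ => 0)) ->
        a = (fun _ => 0)),
     (forall i, I i -> A (fun v => q (i v))) &
     exists i, I i /\ (fun v => q (i v)) <> (fun _ => 0)].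

Definition lie_ideal (L J : Q -> Prop) : Prop :=
  [/\ forall x, J x -> L x,
      J 0,
      forall (a : Phi) x y, J x -> J y -> J (a *: x + y) &
      forall x y, L x -> J y -> J (br x y)].

Definition algebra_of_quotients (L : Q -> Prop) : Prop :=
  forall q : Q, q <> 0 ->
  exists J, [/\ lie_ideal L J,
     (forall a, L a -> (forall j, J j -> br a j = 0) -> a = 0),
     (forall j, J j -> L (br j q)) &
     exists j, J j /\ br j q <> 0].

End LieDefs.

(* Main.v *)
Require Import Defs.
From Stdlib Require Import FunctionalExtensionality Classical.
From mathcomp Require Import all_boot all_algebra.
Set Implicit Arguments. Unset Strict Implicit.
Import GRing.Theory.
Local Open Scope ring_scope.

Inductive Jset (Phi : comPzRingType) (Q : lmodType Phi) (L : Q -> Prop)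
  (I : (Q -> Q) -> Prop) : Q -> Prop :=
 | J0 : Jset L I 0
 | Jgen i x : I i -> L x -> Jset L I (i x)
 | Jlin (a : Phi) x y : Jset L I x -> Jset L I y -> Jset L I (a *: x + y).

Lemma dbl0 (Phi : comPzRingType) (Q : lmodType Phi) (b : Q) : b = b + b -> b = 0.
Proof. move=> H. have: b + b - b = b - b by rewrite -H. by rewrite addrK subrr. Qed.

Theorem mainTheorem20 (Phi : comPzRingType) (Q : lmodType Phi)
  (br : Q -> Q -> Q) (L : Q -> Prop) :
  lie_bracket br -> lie_subalgebra br L ->
  dense_ext br L -> center_zero br ->
  right_ideally_absorbed (inA br) (inA0 br L) ->
  algebra_of_quotients br L.
Proof.
move=> [bl br2 alt jac] [L0 Llin Lbr] dense cz abs q qn0.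
have brl0 : forall z, br 0 z = 0.
  move=> z; apply: dbl0; rewrite -{2}(scale1r (br 0 z)) -bl.
  by rewrite scale1r addr0.
have brr0 : forall z, br z 0 = 0.
  move=> z; apply: dbl0; rewrite -{2}(scale1r (br z 0)) -br2.
  by rewrite scale1r addr0.
have bladd : forall x y z, br (x + y) z = br x z + br y z.
  by move=> x y z; rewrite -{1}(scale1r x) bl scale1r.
have bradd : forall x y z, br z (x + y) = br z x + br z y.
  by move=> x y z; rewrite -{1}(scale1r x) br2 scale1r.
have anti : forall x y, br x y = - br y x.
  move=> x y; apply/eqP; rewrite -addr_eq0; apply/eqP.
  have := alt (x + y); rewrite bladd !bradd !alt add0r addr0 => H.
  by rewrite H.
have LN : forall z, L z -> L (- z).
  by move=> z Lz; have := Llin (-1) z 0 Lz L0; rewrite scaleN1r addr0.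
have densA : forall mu, inA br mu -> (forall x, L x -> mu x = 0) -> mu = (fun _ => 0).
  move=> mu Amu H; apply: dense => //; exists 0, mu; split => //.
  by apply: functional_extensionality => v; rewrite scale0r add0r.
have adqA : inA br (ad br q) by apply: inA_ad.
have adqn0 : ad br q <> (fun _ => 0).
  move=> E; apply: qn0; apply: cz => y.
  by have := f_equal (fun f => f y) E.
have [I [Iid Iann IqA [i0 [Ii0 Ii0n]]]] := abs _ adqA adqn0.
have [IA _ _ _ Imul] := Iid.
have JL : forall y, Jset L I y -> L y.
  move=> y; elim => [|i x Ii Lx|a x y' _ Hx _ Hy]; first exact: L0.
  - by have [_ ] := IA _ Ii; apply.
  - by apply: Llin.
exists (Jset L I); split.
- split.
  + exact: JL.
  + exact: J0.
  + by move=> a x y Jx Jy; apply: Jlin.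
  + move=> x y Lx; elim => [|i z Ii Lz|a u v _ Hu _ Hv].
    * by rewrite brr0; apply: J0.
    * have A0x : inA0 br L (ad br x).
        split; first exact: inA_ad.
        by move=> w Lw; apply: Lbr.
      have [H1 _] := Imul _ _ A0x Ii.
      exact: (@Jgen _ _ L I (fun v => ad br x (i v)) z H1 Lz).
    * by rewrite br2; apply: Jlin.
- move=> a La Ha.
  have A0a : inA0 br L (ad br a).
    split; first exact: inA_ad.
    by move=> w Lw; apply: Lbr.
  have E := Iann _ A0a.
  have : ad br a = (fun _ => 0).
    apply: E => i Ii; apply: densA.
      apply: inA_comp; first exact: inA_ad.
      by have [] := IA _ Ii.
    by move=> x Lx; apply: Ha; apply: Jgen.
  move=> E2; apply: cz => y; by have := f_equal (fun f => f y) E2.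
- move=> j; elim => [|i x Ii Lx|a u v _ Hu _ Hv].
  + by rewrite brl0.
  + rewrite anti; apply: LN.
    have [_ ] := IqA _ Ii; apply; exact: Lx.
  + by rewrite bl; apply: Llin.
- have [x [Lx Hx]] : exists x, L x /\ br q (i0 x) <> 0.
    apply: NNPP => Hn; apply: Ii0n; apply: densA.
      apply: inA_comp; first exact: inA_ad.
      by have [] := IA _ Ii0.
    move=> x Lx; apply: NNPP => Hx; apply: Hn; by exists x.
  exists (i0 x); split; first exact: Jgen.
  rewrite anti => /eqP; rewrite oppr_eq0 => /eqP; exact: Hx.
Qed.
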